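(* Assume (A1), let $f_*\in\mathcal H_K$, let $\theta\in(0,1)$ with $\theta>\frac{q}{q+1}$, let $\eta_t=\eta_1t^{-\theta}$ with $\eta_1$ satisfying (R1), and let $T\ge2$. Let $g_T=a_T$ or $g_T=b_T$. Then $$\mathcal{E}_{\mathbf z}(g_T)-\mathcal{E}_{\mathbf z}(f_* )\le\Big(\frac{2\|f_*\|_K^2}{\eta_1}+\overline C_1\Big)\overline\Lambda_T,$$ where $\overline\Lambda_T=T^{-(1-\theta)}$ if $\theta>\frac{q+1}{q+2}$, $\overline\Lambda_T=(\log T)T^{-(1-\theta)}$ if $\theta=\frac{q+1}{q+2}$, $\overline\Lambda_T=T^{-(\theta(1+q)-q)}$ if $\theta<\frac{q+1}{q+2}$, and $\overline C_1>0$ is a constant depending only on $q,\kappa,\theta,\eta_1,c_q$ (not on $T$, $m$, $\mathbf z$, $f_*$).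
   Context: Setting. $X$ is a separable metric space, $Y\subseteq\mathbb{R}$, and $V:\mathbb{R}\times\mathbb{R}\to[0,\infty)$ is a measurable loss, convex in its second argument; $V'_-(y,a)$ denotes the left derivative of $a\mapsto V(y,a)$. A sample $\mathbf{z}=\{(x_i,y_i)\}_{i=1}^m\subset X\times Y$ is given, and $\mathcal{E}_{\mathbf z}(f)=\frac1m\sum_{i=1}^m V(y_i,f(x_i))$ is the empirical risk. $K:X\times X\to\mathbb{R}$ is a reproducing kernel with reproducing kernel Hilbert space $(\mathcal{H}_K,\|\cdot\|_K)$, $K_x=K(x,\cdot)$. Given step sizes $\eta_t>0$, the iterates are $f_1=0$ and $f_{t+1}=f_t-\eta_t\frac1m\sum_{j=1}^m V'_-(y_j,f_t(x_j))K_{x_j}$ for $t=1,\dots,T$. The weighted average iterate is $a_T=\sum_{t=1}^T\omega_tf_t$ with $\omega_t=\eta_t/\sum_{s=1}^T\eta_s$, and the best iterate is $b_T=\arg\min_{t=1,\dots,T}\mathcal{E}_{\mathbf z}(f_t)$. Assumption (A1) (parts used): $\kappa:=\sup_{x\in X}\sqrt{K(x,x)}<\infty$, $|V|_0:=\sup_{y\in Y}V(y,0)<\infty$, and there are $q\ge 0$, $c_q>0$ with $|V'_-(y,a)|\le c_q(1+|a|^q)$ for all $a\in\mathbb{R}$, $y\in Y$. Step-size condition (R1): $0<\eta_1\le\min\Big\{\frac{\sqrt{1-\theta}}{\sqrt2\,c_q(\kappa+1)^{q+1}},\ \frac{1-\theta}{4|V|_0}\Big\}$. *)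

(* Defs.v *)
From Stdlib Require Import Reals Lra.
Open Scope R_scope.

Fixpoint rsum (n : nat) (f : nat -> R) : R :=
  match n with
  | O => 0
  | S k => rsum k f + f k
  end.

(* |a|^q for q >= 0, with the convention 0^0 = 1 and 0^q = 0 for q > 0. *)
Definition abspow (a q : R) : R :=
  if Rlt_dec 0 (Rabs a) then Rpower (Rabs a) q
  else if Req_EM_T q 0 then 1 else 0.

(* A reproducing kernel Hilbert space over X, given abstractly: a real inner
   product space H whose elements are (injectively) real functions on X via
   [heval], together with the feature map x |-> K_x satisfying the
   reproducing property f(x) = <f, K_x>. *)
Record RKHS (X : Type) := {
  hcar :> Type;
  hzero : hcar;
  hadd : hcar -> hcar -> hcar;
  hscal : R -> hcar -> hcar;
  hip : hcar -> hcar -> R;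
  hadd_assoc : forall u v w, hadd u (hadd v w) = hadd (hadd u v) w;
  hadd_comm : forall u v, hadd u v = hadd v u;
  hadd_0 : forall u, hadd u hzero = u;
  hadd_opp : forall u, hadd u (hscal (-1) u) = hzero;
  hscal_1 : forall u, hscal 1 u = u;
  hscal_assoc : forall a b u, hscal a (hscal b u) = hscal (a * b) u;
  hscal_distr_v : forall a u v, hscal a (hadd u v) = hadd (hscal a u) (hscal a v);
  hscal_distr_s : forall a b u, hscal (a + b) u = hadd (hscal a u) (hscal b u);
  hip_sym : forall u v, hip u v = hip v u;
  hip_add_l : forall u v w, hip (hadd u v) w = hip u w + hip v w;
  hip_scal_l : forall a u v, hip (hscal a u) v = a * hip u v;
  hip_pos : forall u, 0 <= hip u u;
  hip_def : forall u, hip u u = 0 -> u = hzero;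
  heval : hcar -> X -> R;
  heval_inj : forall f g, (forall x, heval f x = heval g x) -> f = g;
  hfeat : X -> hcar;
  hreprod : forall f x, heval f x = hip f (hfeat x)
}.

Arguments hzero {X} _.
Arguments hadd {X} _ _ _.
Arguments hscal {X} _ _ _.
Arguments hip {X} _ _ _.
Arguments heval {X} _ _ _.
Arguments hfeat {X} _ _.

Definition kern {X} (H : RKHS X) (x y : X) : R := heval H (hfeat H x) y.

Definition hnorm2 {X} (H : RKHS X) (f : H) : R := hip H f f.

Fixpoint hsum {X} (H : RKHS X) (n : nat) (g : nat -> H) : H :=
  match n with
  | O => hzero H
  | S k => hadd H (hsum H k g) (g k)
  end.

Definition emp_risk {X} (H : RKHS X) (V : R -> R -> R) (m : nat)
  (xs : nat -> X) (ys : nat -> R) (f : H) : R :=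
  / INR m * rsum m (fun i => V (ys i) (heval H f (xs i))).

Definition step (eta1 theta : R) (t : nat) : R := eta1 * Rpower (INR t) (- theta).

(* Gradient-type iterates: gd k = f_{k+1}, i.e. gd 0 = f_1 = 0 and
   f_{t+1} = f_t - eta_t (1/m) sum_j V'_-(y_j, f_t(x_j)) K_{x_j}. *)
Fixpoint gd {X} (H : RKHS X) (Vd : R -> R -> R) (m : nat)
  (xs : nat -> X) (ys : nat -> R) (eta : nat -> R) (k : nat) : H :=
  match k with
  | O => hzero H
  | S k' =>
      let ft := gd H Vd m xs ys eta k' in
      hadd H ft
        (hscal H (- (eta (S k') / INR m))
           (hsum H m (fun j => hscal H (Vd (ys j) (heval H ft (xs j))) (hfeat H (xs j)))))
  end.

Definition iterate {X} (H : RKHS X) Vd m xs ys eta (t : nat) : H :=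
  gd H Vd m xs ys eta (Nat.pred t).

Definition wavg {X} (H : RKHS X) Vd m xs ys (eta : nat -> R) (T : nat) : H :=
  hsum H T (fun i => hscal H (eta (S i) / rsum T (fun s => eta (S s)))
                             (iterate H Vd m xs ys eta (S i))).

Definition LambdaT (q theta : R) (T : nat) : R :=
  let t := INR T in
  if Rlt_dec ((q + 1) / (q + 2)) theta then Rpower t (- (1 - theta))
  else if Req_EM_T theta ((q + 1) / (q + 2)) then ln t * Rpower t (- (1 - theta))
  else Rpower t (- (theta * (1 + q) - q)).

Definition is_left_deriv (V Vd : R -> R -> R) : Prop :=
  forall y a eps, 0 < eps -> exists delta, 0 < delta /\
    forall h, 0 < h < delta ->
      Rabs ((V y a - V y (a - h)) / h - Vd y a) < eps.

Definition convex_second (V : R -> R -> R) : Prop :=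
  forall y a b l, 0 <= l <= 1 ->
    V y (l * a + (1 - l) * b) <= l * V y a + (1 - l) * V y b.

(* Main.v *)
Require Import Defs.
From Stdlib Require Import Reals Lra Lia.
Open Scope R_scope.

Lemma Rpower_1_base : forall x, Rpower 1 x = 1.
Proof. intros; unfold Rpower; rewrite ln_1, Rmult_0_r, exp_0; auto. Qed.

Lemma Rpower_pos : forall x y, 0 < Rpower x y.
Proof. intros; unfold Rpower; apply exp_pos. Qed.

Lemma rsum_ext : forall n f g, (forall i, (i < n)%nat -> f i = g i) -> rsum n f = rsum n g.
Proof. induction n; cbn [rsum]; intros; auto. rewrite (IHn f g) by (intros; apply H; lia). rewrite H by lia; auto. Qed.

Lemma rsum_le : forall n f g, (forall i, (i < n)%nat -> f i <= g i) -> rsum n f <= rsum n g.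
Proof. induction n; cbn [rsum]; intros. lra. assert (rsum n f <= rsum n g) by (apply (IHn f g); intros; apply H; lia).
 assert (f n <= g n) by (apply H; lia). lra. Qed.

Lemma rsum_plus : forall n f g, rsum n (fun i => f i + g i) = rsum n f + rsum n g.
Proof. induction n; cbn [rsum]; intros. lra. rewrite IHn; lra. Qed.

Lemma rsum_scal : forall n c f, rsum n (fun i => c * f i) = c * rsum n f.
Proof. induction n; cbn [rsum]; intros. lra. rewrite IHn; lra. Qed.

Lemma rsum_const_le : forall n c f, (forall i, (i < n)%nat -> c <= f i) -> INR n * c <= rsum n f.
Proof. induction n; cbn [rsum]; intros. simpl; lra. rewrite S_INR.
 assert (INR n * c <= rsum n f) by (apply (IHn c f); intros; apply H; lia).
 assert (c <= f n) by (apply H; lia). lra. Qed.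

Lemma rsum_abs : forall n f, Rabs (rsum n f) <= rsum n (fun i => Rabs (f i)).
Proof. induction n; cbn [rsum]; intros. rewrite Rabs_R0; lra.
 eapply Rle_trans. apply Rabs_triang. specialize (IHn f). lra. Qed.

Lemma rsum_nonneg : forall n f, (forall i, (i < n)%nat -> 0 <= f i) -> 0 <= rsum n f.
Proof. intros. replace 0 with (INR n * 0) by ring. apply rsum_const_le; auto. Qed.

Lemma mvt_pow : forall x p, 0 < x -> exists c, x < c < x + 1 /\
   Rpower (x+1) p - Rpower x p = p * Rpower c (p - 1).
Proof. intros x p Hx.
 destruct (MVT_cor2 (fun y => Rpower y p) (fun y => p * Rpower y (p-1)) x (x+1)) as [c [Hc1 Hc2]].
 lra. intros; apply derivable_pt_lim_power; lra.
 exists c; split; auto. rewrite Hc1; ring. Qed.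

Lemma Rpower_neg_anti : forall a x y, 0 <= a -> 0 < x <= y -> Rpower y (-a) <= Rpower x (-a).
Proof. intros. rewrite !Rpower_Ropp. apply Rinv_le_contravar. apply Rpower_pos.
 apply Rle_Rpower_l; auto. Qed.

Definition pterm (a : R) (k : nat) : R := Rpower (INR (S k)) (- a).

Lemma INR_S_pos : forall k, 0 < INR (S k).
Proof. intros; apply lt_0_INR; lia. Qed.

Lemma sum_lt1 : forall a n, 0 < a < 1 -> (1 <= n)%nat ->
  (1 - a) * rsum n (pterm a) <= Rpower (INR n) (1 - a).
Proof. intros a n Ha Hn. induction Hn.
 - simpl. unfold pterm. simpl. rewrite Rpower_1_base, Rplus_0_l. rewrite Rpower_1_base. lra.
 - simpl rsum. assert (Hm : 0 < INR m) by (apply lt_0_INR; lia).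
   destruct (mvt_pow (INR m) (1 - a) Hm) as [c [Hc1 Hc2]].
   rewrite S_INR. replace (1 - a - 1) with (-a) in Hc2 by ring.
   assert (pterm a m <= Rpower c (-a)). { unfold pterm. rewrite S_INR. apply Rpower_neg_anti; lra. }
   nra.
Qed.

Lemma sum_gt1 : forall a n, 1 < a -> (1 <= n)%nat ->
  rsum n (pterm a) <= 1 + (1 - Rpower (INR n) (1 - a)) / (a - 1).
Proof. intros a n Ha Hn. induction Hn.
 - simpl. unfold pterm. simpl. rewrite Rpower_1_base, Rplus_0_l. rewrite Rpower_1_base.
   unfold Rdiv. lra.
 - simpl rsum. assert (Hm : 0 < INR m) by (apply lt_0_INR; lia).
   destruct (mvt_pow (INR m) (1 - a) Hm) as [c [Hc1 Hc2]].
   rewrite S_INR. replace (1 - a - 1) with (-a) in Hc2 by ring.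
   assert (pterm a m <= Rpower c (-a)). { unfold pterm. rewrite S_INR. apply Rpower_neg_anti; lra. }
   assert (E: (1 - Rpower (INR m + 1) (1 - a)) / (a - 1) = (1 - Rpower (INR m) (1 - a)) / (a - 1) + Rpower c (-a)).
   { replace (Rpower (INR m + 1) (1 - a)) with (Rpower (INR m) (1-a) + (1-a)*Rpower c (-a)) by lra. field. lra. }
   rewrite E. lra.
Qed.

Lemma sum_eq1 : forall n, (1 <= n)%nat -> rsum n (pterm 1) <= 1 + ln (INR n).
Proof. intros n Hn. induction Hn.
 - simpl. unfold pterm. simpl. rewrite Rpower_1_base, ln_1. lra.
 - simpl rsum. assert (Hm : 0 < INR m) by (apply lt_0_INR; lia).
   assert (pterm 1 m <= ln (INR (S m)) - ln (INR m)).
   { unfold pterm. rewrite Rpower_Ropp, Rpower_1 by apply INR_S_pos. rewrite S_INR.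
     destruct (Rlt_or_le (ln (INR m + 1) - ln (INR m)) (/ (INR m + 1))) as [Hc|Hc]; [exfalso|lra].
     assert (H1: exp (ln (INR m + 1) + - / (INR m + 1)) < exp (ln (INR m))) by (apply exp_increasing; lra).
     rewrite exp_plus, !exp_ln in H1 by lra.
     pose proof (exp_ineq1_le (- / (INR m + 1))).
     assert ((INR m + 1) * (1 + - / (INR m + 1)) = INR m) by (field; lra).
     nra. }
   lra.
Qed.

Lemma sum_lower : forall th T, 0 <= th -> (1 <= T)%nat ->
  Rpower (INR T) (1 - th) <= rsum T (pterm th).
Proof. intros th T Hth HT.
 assert (HT' : 0 < INR T) by (apply lt_0_INR; lia).
 replace (Rpower (INR T) (1 - th)) with (INR T * Rpower (INR T) (- th)).
 apply rsum_const_le. intros. unfold pterm. apply Rpower_neg_anti; auto. split. apply INR_S_pos. apply le_INR; lia.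
 unfold Rminus. rewrite Rpower_plus, Rpower_1; auto.
Qed.

Lemma hip_add_r : forall X (H : RKHS X) (u v w : H), hip H u (hadd H v w) = hip H u v + hip H u w.
Proof. intros. rewrite (hip_sym _ H u), hip_add_l, (hip_sym _ H v), (hip_sym _ H w); auto. Qed.

Lemma hip_scal_r : forall X (H : RKHS X) a (u v : H), hip H u (hscal H a v) = a * hip H u v.
Proof. intros. rewrite (hip_sym _ H u), hip_scal_l, (hip_sym _ H v); auto. Qed.

Lemma hip_zero_l : forall X (H : RKHS X) (v : H), hip H (hzero H) v = 0.
Proof. intros. rewrite <- (hadd_opp _ H (hzero H)). rewrite hip_add_l, hip_scal_l. ring. Qed.

Lemma hip_zero_r : forall X (H : RKHS X) (v : H), hip H v (hzero H) = 0.
Proof. intros. rewrite hip_sym. apply hip_zero_l. Qed.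

Lemma heval_add : forall X (H : RKHS X) (u v : H) x, heval H (hadd H u v) x = heval H u x + heval H v x.
Proof. intros. rewrite !hreprod, hip_add_l; auto. Qed.

Lemma heval_scal : forall X (H : RKHS X) a (u : H) x, heval H (hscal H a u) x = a * heval H u x.
Proof. intros. rewrite !hreprod, hip_scal_l; auto. Qed.

Lemma heval_zero : forall X (H : RKHS X) x, heval H (hzero H) x = 0.
Proof. intros. rewrite hreprod; apply hip_zero_l. Qed.

Lemma heval_hsum : forall X (H : RKHS X) n g x, heval H (hsum H n g) x = rsum n (fun i => heval H (g i) x).
Proof. induction n; intros; cbn [hsum rsum]. apply heval_zero. rewrite heval_add, IHn; auto. Qed.

Lemma hip_hsum_l : forall X (H : RKHS X) n g v, hip H (hsum H n g) v = rsum n (fun i => hip H (g i) v).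
Proof. induction n; intros; cbn [hsum rsum]. apply hip_zero_l. rewrite hip_add_l, IHn; auto. Qed.

Lemma hip_expand : forall X (H : RKHS X) (u v : H) l,
  hip H (hadd H u (hscal H l v)) (hadd H u (hscal H l v)) = hip H u u + 2 * l * hip H u v + l * l * hip H v v.
Proof. intros. rewrite hip_add_l, !hip_add_r, !hip_scal_l, !hip_scal_r, (hip_sym _ H v u). ring. Qed.

Lemma cauchy_schwarz : forall X (H : RKHS X) (u v : H), Rabs (hip H u v) <= sqrt (hip H u u) * sqrt (hip H v v).
Proof. intros.
 pose proof (hip_pos _ H u) as Pu. pose proof (hip_pos _ H v) as Pv.
 destruct (Req_dec (hip H v v) 0) as [E|E].
 - apply hip_def in E. rewrite E, hip_zero_r, Rabs_R0. apply Rmult_le_pos; apply sqrt_pos.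
 - assert (Hb : 0 < hip H v v) by lra.
   pose proof (hip_pos _ H (hadd H u (hscal H (- hip H u v / hip H v v) v))) as P.
   rewrite hip_expand in P.
   assert (Q : hip H u v * hip H u v <= hip H u u * hip H v v).
   { set (a := hip H u u) in *. set (b := hip H v v) in *. set (c := hip H u v) in *.
     assert (a + 2 * (- c / b) * c + - c / b * (- c / b) * b = a - c * c / b) by (field; lra).
     rewrite H0 in P. assert (c * c / b * b = c * c) by (field; lra).
     assert (0 <= (a - c * c / b) * b) by (apply Rmult_le_pos; lra). nra. }
   rewrite <- sqrt_mult by lra. rewrite <- sqrt_Rsqr_abs. apply sqrt_le_1_alt. unfold Rsqr. lra.
Qed.

Lemma eval_bound : forall X (H : RKHS X) kappa (f : H) x,
  (forall x, sqrt (kern H x x) <= kappa) ->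
  Rabs (heval H f x) <= kappa * sqrt (hnorm2 H f).
Proof. intros. rewrite hreprod. eapply Rle_trans. apply cauchy_schwarz.
 unfold kern in H0. specialize (H0 x). rewrite hreprod in H0. unfold hnorm2.
 rewrite Rmult_comm. apply Rmult_le_compat_r. apply sqrt_pos. auto. Qed.

Lemma subgrad : forall V Vd, convex_second V -> is_left_deriv V Vd ->
  forall y a b, V y a + Vd y a * (b - a) <= V y b.
Proof. intros V Vd Hc Hd y a b.
 destruct (Rtotal_order b a) as [Hba|[Hba|Hba]].
 - destruct (Rle_or_lt (V y a + Vd y a * (b - a)) (V y b)) as [OK|NO]; auto. exfalso.
   set (d := a - b). assert (Hdp : 0 < d) by (unfold d; lra).
   set (eps := (V y a - V y b) / d - Vd y a).
   assert (Heps : 0 < eps). { unfold eps. apply Rlt_Rminus. apply (Rmult_lt_reg_r d); auto.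
     unfold Rdiv. rewrite Rmult_assoc, Rinv_l, Rmult_1_r by lra. unfold d; lra. }
   destruct (Hd y a eps Heps) as [del [Hdel Hh]].
   set (h := Rmin (del / 2) d). assert (Hh1 : 0 < h) by (unfold h; apply Rmin_glb_lt; lra).
   assert (Hh2 : h < del) by (unfold h; eapply Rle_lt_trans; [apply Rmin_l| lra]).
   assert (Hh3 : h <= d) by (unfold h; apply Rmin_r).
   specialize (Hh h (conj Hh1 Hh2)).
   pose proof (Hc y b a (h / d)) as C.
   assert (Hl: 0 <= h / d <= 1). { split. apply Rlt_le, Rdiv_lt_0_compat; lra.
     apply (Rmult_le_reg_r d); auto. unfold Rdiv; rewrite Rmult_assoc, Rinv_l by lra. lra. }
   specialize (C Hl).
   replace (h / d * b + (1 - h / d) * a) with (a - h) in C by (unfold d; field; lra).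
   apply Rabs_def2 in Hh. destruct Hh as [Hh _].
   set (Q := (V y a - V y (a - h)) / h) in *.
   assert (EQ : Q * h = V y a - V y (a - h)) by (unfold Q; field; lra).
   set (P := (V y a - V y b) / d) in *.
   assert (EP : P * d = V y a - V y b) by (unfold P; field; lra).
   assert (Q < P) by (unfold eps in Hh; lra).
   (* from C: V(a-h) <= h/d Vb + (1-h/d) Va  => Q >= P *)
   assert (C' : V y (a - h) <= V y a - h * P).
   { replace (h / d * V y b + (1 - h / d) * V y a) with (V y a - h * P) in C; auto.
     replace (V y b) with (V y a - P * d) by lra. field. lra. }
   nra.
 - subst. lra.
 - destruct (Rle_or_lt (V y a + Vd y a * (b - a)) (V y b)) as [OK|NO]; auto. exfalso.
   set (d := b - a). assert (Hdp : 0 < d) by (unfold d; lra).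
   set (P := (V y b - V y a) / d).
   assert (EP : P * d = V y b - V y a) by (unfold P; field; lra).
   assert (HP : P < Vd y a). { apply (Rmult_lt_reg_r d); auto. rewrite EP. unfold d; lra. }
   set (eps := Vd y a - P). assert (Heps : 0 < eps) by (unfold eps; lra).
   destruct (Hd y a eps Heps) as [del [Hdel Hh]].
   set (h := del / 2). assert (Hh1 : 0 < h) by (unfold h; lra).
   assert (Hh2 : h < del) by (unfold h; lra). specialize (Hh h (conj Hh1 Hh2)).
   set (l := d / (d + h)).
   assert (Hl: 0 <= l <= 1). { unfold l; split. apply Rlt_le, Rdiv_lt_0_compat; lra.
     apply (Rmult_le_reg_r (d + h)). lra. unfold Rdiv; rewrite Rmult_assoc, Rinv_l by lra. lra. }
   pose proof (Hc y (a - h) b l Hl) as C.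
   replace (l * (a - h) + (1 - l) * b) with a in C by (unfold l, d; field; lra).
   apply Rabs_def2 in Hh. destruct Hh as [_ Hh].
   set (Q := (V y a - V y (a - h)) / h) in *.
   assert (EQ : Q * h = V y a - V y (a - h)) by (unfold Q; field; lra).
   assert (P < Q) by (unfold eps in Hh; lra).
   assert (C2 : (d + h) * V y a <= d * V y (a - h) + h * V y b).
   { assert (E1 : (d + h) * (l * V y (a - h) + (1 - l) * V y b) = d * V y (a - h) + h * V y b)
       by (unfold l; field; lra).
     rewrite <- E1. apply Rmult_le_compat_l; lra. }
   assert (d * (Q * h) <= h * (P * d)) by (rewrite EQ, EP; lra).
   assert (0 < d * h) by (apply Rmult_lt_0_compat; lra).
   nra.
Qed.

Definition phi {X} (H : RKHS X) (f u : H) : R := hnorm2 H u - 2 * hip H u f + hnorm2 H f.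

Lemma phi_nonneg : forall X (H : RKHS X) f u, 0 <= phi H f u.
Proof. intros. unfold phi, hnorm2. pose proof (hip_pos _ H (hadd H u (hscal H (-1) f))).
 rewrite hip_expand in H0. lra. Qed.

Lemma phi_zero : forall X (H : RKHS X) f, phi H f (hzero H) = hnorm2 H f.
Proof. intros. unfold phi, hnorm2. rewrite hip_zero_l, hip_zero_l. ring. Qed.

Lemma phi_self0 : forall X (H : RKHS X) u, phi H (hzero H) u = hnorm2 H u.
Proof. intros. unfold phi, hnorm2. rewrite hip_zero_r, hip_zero_r. ring. Qed.

Lemma phi_step_eq : forall X (H : RKHS X) f u s S,
  phi H f (hadd H u (hscal H s S)) = phi H f u + 2 * s * (hip H S u - hip H S f) + s * s * hip H S S.
Proof. intros. unfold phi, hnorm2. rewrite hip_expand, hip_add_l, hip_scal_l, (hip_sym _ H u S). ring. Qed.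

Definition gradS {X} (H : RKHS X) (Vd : R -> R -> R) (m : nat) (xs : nat -> X) (ys : nat -> R) (u : H) : H :=
  hsum H m (fun j => hscal H (Vd (ys j) (heval H u (xs j))) (hfeat H (xs j))).

Lemma gd_S : forall X (H : RKHS X) Vd m xs ys eta k,
  gd H Vd m xs ys eta (S k) = hadd H (gd H Vd m xs ys eta k)
     (hscal H (- (eta (S k) / INR m)) (gradS H Vd m xs ys (gd H Vd m xs ys eta k))).
Proof. reflexivity. Qed.

Lemma hip_gradS : forall X (H : RKHS X) Vd m xs ys u g,
  hip H (gradS H Vd m xs ys u) g = rsum m (fun j => Vd (ys j) (heval H u (xs j)) * heval H g (xs j)).
Proof. intros. unfold gradS. rewrite hip_hsum_l. apply rsum_ext; intros.
 rewrite hip_scal_l, hip_sym, <- hreprod; auto. Qed.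

Lemma norm_gradS : forall X (H : RKHS X) Vd m xs ys u kappa L,
  (forall x, sqrt (kern H x x) <= kappa) -> 0 <= kappa ->
  (forall j, (j < m)%nat -> Rabs (Vd (ys j) (heval H u (xs j))) <= L) ->
  hip H (gradS H Vd m xs ys u) (gradS H Vd m xs ys u) <= (kappa * (INR m * L)) * (kappa * (INR m * L)).
Proof. intros X H Vd m xs ys u kappa L Hk Hk0 HL.
 set (S := gradS H Vd m xs ys u).
 set (K := kappa * rsum m (fun j => Rabs (Vd (ys j) (heval H u (xs j))))).
 assert (HK : 0 <= K). { unfold K. apply Rmult_le_pos; auto. apply rsum_nonneg; intros; apply Rabs_pos. }
 assert (HK2 : K <= kappa * (INR m * L)). { unfold K. apply Rmult_le_compat_l; auto.
   rewrite Rmult_comm. rewrite <- (Rmult_1_r (L * INR m)).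
   replace (L * INR m * 1) with (INR m * L) by ring.
   replace (INR m * L) with (rsum m (fun _ => L)). apply rsum_le; auto.
   clear. induction m; cbn [rsum]. simpl; ring. rewrite IHm, S_INR; ring. }
 set (r := sqrt (hip H S S)).
 assert (Hr : 0 <= r) by apply sqrt_pos.
 assert (Hrr : r * r = hip H S S) by (apply sqrt_sqrt, hip_pos).
 assert (B : hip H S S <= K * r).
 { unfold S at 1. rewrite hip_gradS. eapply Rle_trans. apply Rle_abs. eapply Rle_trans. apply rsum_abs.
   replace (K * r) with (rsum m (fun j => kappa * r * Rabs (Vd (ys j) (heval H u (xs j)))))
     by (unfold K; rewrite rsum_scal; ring).
   apply rsum_le; intros. rewrite Rabs_mult. rewrite (Rmult_comm (kappa * r)).
   apply Rmult_le_compat_l. apply Rabs_pos.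
   apply eval_bound; auto. }
 assert (r <= K) by nra.
 rewrite <- Hrr. apply Rmult_le_compat; lra.
Qed.

Lemma gd_step : forall X (H : RKHS X) V Vd m xs ys (u f : H) eta kappa L,
  convex_second V -> is_left_deriv V Vd -> (0 < m)%nat -> 0 < eta ->
  (forall x, sqrt (kern H x x) <= kappa) -> 0 <= kappa ->
  (forall j, (j < m)%nat -> Rabs (Vd (ys j) (heval H u (xs j))) <= L) ->
  phi H f (hadd H u (hscal H (- (eta / INR m)) (gradS H Vd m xs ys u)))
    <= phi H f u - 2 * eta * (emp_risk H V m xs ys u - emp_risk H V m xs ys f)
       + eta * eta * (kappa * L) * (kappa * L).
Proof. intros X H V Vd m xs ys u f eta kappa L Hc Hd Hm He Hk Hk0 HL.
 rewrite phi_step_eq. rewrite (hip_gradS X H Vd m xs ys u u), (hip_gradS X H Vd m xs ys u f).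
 assert (Hm' : 0 < INR m) by (apply lt_0_INR; lia).
 assert (D : rsum m (fun j => V (ys j) (heval H u (xs j))) - rsum m (fun j => V (ys j) (heval H f (xs j)))
   <= rsum m (fun j => Vd (ys j) (heval H u (xs j)) * heval H u (xs j)) -
      rsum m (fun j => Vd (ys j) (heval H u (xs j)) * heval H f (xs j))).
 { assert (forall g1 g2, rsum m g1 - rsum m g2 = rsum m (fun j => g1 j + -1 * g2 j)).
   { intros. rewrite rsum_plus, rsum_scal. ring. }
   rewrite !H0. apply rsum_le. intros. pose proof (subgrad V Vd Hc Hd (ys i) (heval H u (xs i)) (heval H f (xs i))). nra. }
 pose proof (norm_gradS X H Vd m xs ys u kappa L Hk Hk0 HL) as N.
 unfold emp_risk.
 set (A := rsum m (fun j => V (ys j) (heval H u (xs j)))) in *.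
 set (B := rsum m (fun j => V (ys j) (heval H f (xs j)))) in *.
 set (G := hip H (gradS H Vd m xs ys u) (gradS H Vd m xs ys u)) in *.
 set (C1 := rsum m (fun j => Vd (ys j) (heval H u (xs j)) * heval H u (xs j))) in *.
 set (C2 := rsum m (fun j => Vd (ys j) (heval H u (xs j)) * heval H f (xs j))) in *.
 assert (E1 : 2 * - (eta / INR m) * (C1 - C2) <= - 2 * eta * (/ INR m * A - / INR m * B)).
 { replace (- 2 * eta * (/ INR m * A - / INR m * B)) with (2 * - (eta / INR m) * (A - B)) by (field; lra).
   apply Rmult_le_compat_neg_l; auto. assert (0 < eta / INR m) by (apply Rdiv_lt_0_compat; lra). lra. }
 assert (E2 : - (eta / INR m) * - (eta / INR m) * G <= eta * eta * (kappa * L) * (kappa * L)).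
 { replace (eta * eta * (kappa * L) * (kappa * L)) with
     ((eta / INR m) * (eta / INR m) * ((kappa * (INR m * L)) * (kappa * (INR m * L)))) by (field; lra).
   replace (- (eta / INR m) * - (eta / INR m) * G) with ((eta / INR m) * (eta / INR m) * G) by ring.
   apply Rmult_le_compat_l; auto. apply Rmult_le_pos; apply Rlt_le, Rdiv_lt_0_compat; lra. }
 lra.
Qed.

Lemma Rpower_0_exp : forall b, Rpower b 0 = 1.
Proof. intros. unfold Rpower. rewrite Rmult_0_l, exp_0. auto. Qed.

Lemma abspow_le : forall a b q, 0 <= q -> Rabs a <= b -> abspow a q <= Rpower b q.
Proof. intros. unfold abspow. destruct (Rlt_dec 0 (Rabs a)).
 - apply Rle_Rpower_l; auto; lra.
 - destruct (Req_EM_T q 0). subst. rewrite Rpower_0_exp; lra. left; apply Rpower_pos. Qed.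

Lemma Rpower_ge1 : forall b p, 1 <= b -> 0 <= p -> 1 <= Rpower b p.
Proof. intros. rewrite <- (Rpower_0_exp b). apply Rle_Rpower; auto. Qed.

Definition Acst (q : R) : R := if Rle_dec 1 q then 1 else 9.

Lemma Acst_ge1 : forall q, 1 <= Acst q.
Proof. intros; unfold Acst; destruct Rle_dec; lra. Qed.

Lemma key_A : forall q kappa, 0 <= q -> 0 <= kappa ->
  let P1 := Rpower (kappa + 1) (q + 1) in
  (kappa * (1 + Rpower (kappa * sqrt (Acst q)) q)) * (kappa * (1 + Rpower (kappa * sqrt (Acst q)) q))
    <= (2 * Acst q - 1) * (P1 * P1).
Proof. intros q kappa Hq Hk P1.
 assert (HP1 : 0 < P1) by apply Rpower_pos.
 destruct (Req_dec kappa 0) as [E|E].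
 { subst. rewrite Rmult_0_l. pose proof (Acst_ge1 q). nra. }
 assert (Hk' : 0 < kappa) by lra.
 assert (HkP : kappa + 1 <= P1). { unfold P1. rewrite <- (Rpower_1 (kappa+1)) at 1 by lra. apply Rle_Rpower; lra. }
 assert (HkqP : Rpower kappa (q + 1) <= P1). { unfold P1. apply Rle_Rpower_l; lra. }
 assert (Hkq : kappa * Rpower kappa q = Rpower kappa (q + 1)).
 { rewrite Rplus_comm, Rpower_plus, Rpower_1; auto. }
 unfold Acst. destruct (Rle_dec 1 q).
 - rewrite sqrt_1, Rmult_1_r.
   assert (kappa * (1 + Rpower kappa q) <= P1).
   { unfold P1. rewrite Rpower_plus, Rpower_1 by lra.
     assert (kappa + 1 <= Rpower (kappa + 1) q). { rewrite <- (Rpower_1 (kappa+1)) at 1 by lra. apply Rle_Rpower; lra. }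
     assert (Rpower kappa q <= Rpower (kappa + 1) q) by (apply Rle_Rpower_l; lra).
     assert (kappa * Rpower kappa q <= kappa * Rpower (kappa + 1) q) by (apply Rmult_le_compat_l; lra). nra. }
   assert (0 <= kappa * (1 + Rpower kappa q)) by (pose proof (Rpower_pos kappa q); nra). nra.
 - replace (sqrt 9) with 3 by (symmetry; apply sqrt_lem_1; lra).
   rewrite <- Rpower_mult_distr by lra.
   assert (H3 : Rpower 3 q <= 3). { rewrite <- (Rpower_1 3) at 2 by lra. apply Rle_Rpower; lra. }
   assert (kappa * (1 + Rpower kappa q * Rpower 3 q) <= 4 * P1).
   { pose proof (Rpower_pos kappa q). pose proof (Rpower_pos 3 q).
     assert (kappa * Rpower kappa q * Rpower 3 q <= kappa * Rpower kappa q * 3) by (apply Rmult_le_compat_l; nra). nra. }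
   assert (0 <= kappa * (1 + Rpower kappa q * Rpower 3 q)).
   { apply Rmult_le_pos. lra. pose proof (Rmult_lt_0_compat _ _ (Rpower_pos kappa q) (Rpower_pos 3 q)). lra. }
   nra.
Qed.

Lemma step_bound : forall q cq theta eta1 kappa (t : nat) L,
  0 <= q -> 0 < cq -> 0 < theta < 1 -> 0 < eta1 -> 0 <= kappa -> (1 <= t)%nat ->
  eta1 <= sqrt (1 - theta) / (sqrt 2 * cq * Rpower (kappa + 1) (q + 1)) ->
  L = cq * (1 + Rpower (kappa * sqrt (Acst q) * Rpower (INR t) ((1 - theta) / 2)) q) ->
  step eta1 theta t * step eta1 theta t * (kappa * L) * (kappa * L)
   <= (2 * Acst q - 1) * (1 - theta) / 2 * Rpower (INR t) (q * (1 - theta) - 2 * theta).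
Proof. intros q cq theta eta1 kappa t L Hq Hcq Hth He Hk Ht R1 HL.
 set (P1 := Rpower (kappa + 1) (q + 1)).
 assert (HP1 : 0 < P1) by apply Rpower_pos.
 assert (Htp : 1 <= INR t) by (apply (le_INR 1); auto).
 assert (Hs2 : 0 < sqrt 2) by (apply sqrt_lt_R0; lra).
 assert (R1' : 2 * (eta1 * eta1) * (cq * cq) * (P1 * P1) <= 1 - theta).
 { assert (eta1 * (sqrt 2 * cq * P1) <= sqrt (1 - theta)).
   { assert (HD : 0 < sqrt 2 * cq * P1) by (apply Rmult_lt_0_compat; [apply Rmult_lt_0_compat|]; lra).
     apply (Rmult_le_compat_r (sqrt 2 * cq * P1)) in R1; [|lra].
     replace (sqrt (1 - theta) / (sqrt 2 * cq * Rpower (kappa + 1) (q + 1)) * (sqrt 2 * cq * P1)) with (sqrt (1 - theta)) in R1.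
     exact R1. fold P1. field. lra. }
   assert (0 <= eta1 * (sqrt 2 * cq * P1)) by (left; apply Rmult_lt_0_compat; [|apply Rmult_lt_0_compat; [apply Rmult_lt_0_compat|]]; lra).
   pose proof (sqrt_sqrt (1 - theta) ltac:(lra)). pose proof (sqrt_sqrt 2 ltac:(lra)).
   assert (eta1 * (sqrt 2 * cq * P1) * (eta1 * (sqrt 2 * cq * P1)) <= sqrt (1-theta) * sqrt (1 - theta)) by nra.
   nra. }
 set (s := Rpower (INR t) ((1 - theta) / 2)).
 assert (Hs : 1 <= s) by (apply Rpower_ge1; lra).
 set (Rq := Rpower s q).
 assert (HRq : 1 <= Rq) by (apply Rpower_ge1; lra).
 assert (Hss : Rq * Rq = Rpower (INR t) (q * (1 - theta))).
 { unfold Rq, s. rewrite Rpower_mult, <- Rpower_plus. f_equal. field. }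
 assert (Heta : step eta1 theta t * step eta1 theta t = eta1 * eta1 * Rpower (INR t) (- 2 * theta)).
 { unfold step. replace (-2 * theta) with (- theta + - theta) by ring. rewrite Rpower_plus. ring. }
 assert (Hsplit : Rpower (INR t) (q * (1 - theta) - 2 * theta) = Rpower (INR t) (- 2 * theta) * (Rq * Rq)).
 { rewrite Hss, <- Rpower_plus. f_equal. ring. }
 rewrite Hsplit.
 set (B := kappa * (1 + Rpower (kappa * sqrt (Acst q)) q)).
 assert (HB0 : 0 <= B) by (unfold B; pose proof (Rpower_pos (kappa * sqrt (Acst q)) q); nra).
 assert (HKL : 0 <= kappa * L <= cq * B * Rq).
 { rewrite HL. destruct (Req_dec kappa 0) as [E|E].
   { subst kappa. unfold B. rewrite !Rmult_0_l. rewrite Rmult_0_r. lra. }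
   assert (Hk' : 0 < kappa) by lra.
   assert (HA : 0 < sqrt (Acst q)) by (apply sqrt_lt_R0; pose proof (Acst_ge1 q); lra).
   rewrite <- (Rpower_mult_distr (kappa * sqrt (Acst q))) by (try apply Rmult_lt_0_compat; auto; apply Rpower_pos).
   fold s. fold Rq. unfold B.
   set (W := Rpower (kappa * sqrt (Acst q)) q). assert (0 < W) by apply Rpower_pos.
   pose proof (Rmult_lt_0_compat W Rq H ltac:(lra)).
   assert (kappa * (1 + W * Rq) <= kappa * (1 + W) * Rq).
   { apply Rmult_le_reg_l with (/ kappa). apply Rinv_0_lt_compat; lra.
     replace (/ kappa * (kappa * (1 + W * Rq))) with (1 + W * Rq) by (field; lra).
     replace (/ kappa * (kappa * (1 + W) * Rq)) with (Rq + W * Rq) by (field; lra). lra. }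
   split. apply Rmult_le_pos; [lra|]. apply Rmult_le_pos; lra.
   replace (kappa * (cq * (1 + W * Rq))) with (cq * (kappa * (1 + W * Rq))) by ring.
   replace (cq * (kappa * (1 + W)) * Rq) with (cq * (kappa * (1 + W) * Rq)) by ring.
   apply Rmult_le_compat_l; lra. }
 pose proof (key_A q kappa Hq Hk) as KA. cbv zeta in KA. fold P1 in KA. fold B in KA.
 rewrite Heta.
 set (Et := Rpower (INR t) (- 2 * theta)). assert (0 < Et) by apply Rpower_pos.
 assert (kappa * L * (kappa * L) <= cq * B * Rq * (cq * B * Rq)) by nra.
 assert (cq * B * Rq * (cq * B * Rq) <= cq * cq * ((2 * Acst q - 1) * (P1 * P1)) * (Rq * Rq)).
 { replace (cq * B * Rq * (cq * B * Rq)) with (cq * cq * (B * B) * (Rq * Rq)) by ring.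
   apply Rmult_le_compat_r. nra. apply Rmult_le_compat_l. nra. auto. }
 assert (HA1 : 1 <= Acst q) by apply Acst_ge1.
 assert (eta1 * eta1 * (cq * cq * ((2 * Acst q - 1) * (P1 * P1))) <= (2 * Acst q - 1) * (1 - theta) / 2).
 { replace (eta1 * eta1 * (cq * cq * ((2 * Acst q - 1) * (P1 * P1)))) with
     ((2 * Acst q - 1) * (eta1 * eta1 * (cq * cq) * (P1 * P1))) by ring.
   replace ((2 * Acst q - 1) * (1 - theta) / 2) with ((2 * Acst q - 1) * ((1 - theta) / 2)) by field.
   apply Rmult_le_compat_l. lra. lra. }
 assert (0 < Rq * Rq) by nra.
 replace (eta1 * eta1 * Et * (kappa * L) * (kappa * L)) with (eta1 * eta1 * Et * (kappa * L * (kappa * L))) by ring.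
 assert (eta1 * eta1 * Et * (kappa * L * (kappa * L)) <= eta1 * eta1 * Et * (cq * cq * ((2 * Acst q - 1) * (P1 * P1)) * (Rq * Rq))).
 { apply Rmult_le_compat_l. nra. lra. }
 eapply Rle_trans. exact H4.
 replace (eta1 * eta1 * Et * (cq * cq * ((2 * Acst q - 1) * (P1 * P1)) * (Rq * Rq))) with
   ((eta1 * eta1 * (cq * cq * ((2 * Acst q - 1) * (P1 * P1)))) * (Et * (Rq * Rq))) by ring.
 apply Rmult_le_compat_r. nra. auto.
Qed.

Lemma conv_sum : forall theta k, 0 < theta < 1 ->
  (1 - theta) * rsum k (pterm theta) <= Rpower (INR (S k)) (1 - theta).
Proof. intros. destruct k.
 - simpl. rewrite Rmult_0_r. left; apply Rpower_pos.
 - eapply Rle_trans. apply sum_lt1; auto; lia. apply Rle_Rpower_l. lra.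
   split. apply lt_0_INR; lia. apply le_INR; lia. Qed.

Lemma emp_risk_nonneg : forall X (H : RKHS X) V m xs ys u, (forall y a, 0 <= V y a) ->
  0 <= emp_risk H V m xs ys u.
Proof. intros. unfold emp_risk. destruct m. simpl. lra.
 apply Rmult_le_pos. left; apply Rinv_0_lt_compat, lt_0_INR; lia. apply rsum_nonneg; auto. Qed.

Lemma emp_risk_zero : forall X (H : RKHS X) V m xs ys V0, (0 < m)%nat ->
  (forall j, (j < m)%nat -> V (ys j) 0 <= V0) ->
  emp_risk H V m xs ys (hzero H) <= V0.
Proof. intros. unfold emp_risk. assert (0 < INR m) by (apply lt_0_INR; lia).
 assert (rsum m (fun i => V (ys i) (heval H (hzero H) (xs i))) <= INR m * V0).
 { replace (INR m * V0) with (rsum m (fun _ => V0)). apply rsum_le; intros. rewrite heval_zero; auto.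
   clear. induction m; cbn [rsum]. simpl; ring. rewrite IHm, S_INR; ring. }
 apply (Rmult_le_compat_l (/ INR m)) in H3. replace (/ INR m * (INR m * V0)) with V0 in H3 by (field; lra).
 auto. left; apply Rinv_0_lt_compat; auto. Qed.

Lemma Lbound : forall X (H : RKHS X) (Y : R -> Prop) Vd m xs ys (u : H) q cq theta kappa (t : nat),
  0 <= q -> 0 < theta < 1 -> (1 <= t)%nat ->
  (forall x, sqrt (kern H x x) <= kappa) -> 0 <= kappa ->
  (forall i, (i < m)%nat -> Y (ys i)) ->
  (forall y a, Y y -> Rabs (Vd y a) <= cq * (1 + abspow a q)) -> 0 < cq ->
  hnorm2 H u <= Acst q * Rpower (INR t) (1 - theta) ->
  forall j, (j < m)%nat -> Rabs (Vd (ys j) (heval H u (xs j))) <=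
     cq * (1 + Rpower (kappa * sqrt (Acst q) * Rpower (INR t) ((1 - theta) / 2)) q).
Proof. intros. eapply Rle_trans. apply H6; auto.
 apply Rmult_le_compat_l. lra. apply Rplus_le_compat_l. apply abspow_le; auto.
 eapply Rle_trans. apply eval_bound; eauto. rewrite Rmult_assoc. apply Rmult_le_compat_l; auto.
 assert (Ht : 0 < INR t) by (apply lt_0_INR; lia).
 replace (Rpower (INR t) ((1 - theta) / 2)) with (sqrt (Rpower (INR t) (1 - theta))).
 rewrite <- sqrt_mult. apply sqrt_le_1_alt; auto. pose proof (Acst_ge1 q); lra. left; apply Rpower_pos.
 rewrite <- Rpower_sqrt by apply Rpower_pos. rewrite Rpower_mult. f_equal.
Qed.

Lemma Rpower_exp_le : forall t e1 e2, 1 <= t -> e1 <= e2 -> Rpower t e1 <= Rpower t e2.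
Proof. intros; apply Rle_Rpower; auto. Qed.

Lemma iter_bound : forall X (H : RKHS X) (Y : R -> Prop) V Vd V0 m xs ys q cq theta eta1 kappa,
  0 <= q -> 0 < cq -> 0 < theta < 1 -> q / (q + 1) < theta -> 0 < eta1 ->
  (forall y a, 0 <= V y a) -> convex_second V -> is_left_deriv V Vd -> (0 < m)%nat ->
  (forall i, (i < m)%nat -> Y (ys i)) ->
  (forall x, sqrt (kern H x x) <= kappa) -> 0 <= kappa ->
  (forall j, (j < m)%nat -> V (ys j) 0 <= V0) ->
  (forall y a, Y y -> Rabs (Vd y a) <= cq * (1 + abspow a q)) ->
  eta1 <= sqrt (1 - theta) / (sqrt 2 * cq * Rpower (kappa + 1) (q + 1)) ->
  4 * V0 * eta1 <= 1 - theta ->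
  forall k, hnorm2 H (gd H Vd m xs ys (step eta1 theta) k) <= Acst q * ((1 - theta) * rsum k (pterm theta)).
Proof. intros X H Y V Vd V0 m xs ys q cq theta eta1 kappa Hq Hcq Hth Hqt He HV Hc Hd Hm HY Hkb Hk0 HV0 HVd R1 R2.
 assert (HA := Acst_ge1 q).
 assert (Hqt' : q * (1 - theta) - 2 * theta <= - theta).
 { assert (q <= theta * (q + 1)). { apply (Rmult_lt_compat_r (q + 1)) in Hqt; [|lra].
     replace (q / (q + 1) * (q + 1)) with q in Hqt by (field; lra). lra. } lra. }
 induction k.
 - simpl. unfold hnorm2. rewrite hip_zero_l. lra.
 - rewrite gd_S. set (u := gd H Vd m xs ys (step eta1 theta) k) in *.
   assert (Hu : hnorm2 H u <= Acst q * Rpower (INR (S k)) (1 - theta)).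
   { eapply Rle_trans. apply IHk. apply Rmult_le_compat_l. lra. apply conv_sum; auto. }
   set (L := cq * (1 + Rpower (kappa * sqrt (Acst q) * Rpower (INR (S k)) ((1 - theta) / 2)) q)).
   assert (HL := Lbound X H Y Vd m xs ys u q cq theta kappa (S k) Hq Hth ltac:(lia) Hkb Hk0 HY HVd Hcq Hu).
   fold L in HL.
   assert (Heta : 0 < step eta1 theta (S k)) by (unfold step; apply Rmult_lt_0_compat; auto; apply Rpower_pos).
   pose proof (gd_step X H V Vd m xs ys u (hzero H) (step eta1 theta (S k)) kappa L Hc Hd Hm Heta Hkb Hk0 HL) as G.
   rewrite !phi_self0 in G.
   pose proof (step_bound q cq theta eta1 kappa (S k) L Hq Hcq Hth He Hk0 ltac:(lia) R1 eq_refl) as SB.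
   assert (Hpt : Rpower (INR (S k)) (q * (1 - theta) - 2 * theta) <= pterm theta k).
   { unfold pterm. apply Rpower_exp_le; auto. apply (le_INR 1); lia. }
   assert (HE0 := emp_risk_zero X H V m xs ys V0 Hm HV0).
   assert (HEu := emp_risk_nonneg X H V m xs ys u HV).
   assert (Hst : step eta1 theta (S k) = eta1 * pterm theta k) by reflexivity.
   assert (Hp : 0 < pterm theta k) by apply Rpower_pos.
   cbn [rsum]. rewrite Rmult_plus_distr_l, Rmult_plus_distr_l.
   assert (- 2 * step eta1 theta (S k) * (emp_risk H V m xs ys u - emp_risk H V m xs ys (hzero H))
             <= (1 - theta) / 2 * pterm theta k).
   { rewrite Hst. assert (2 * (eta1 * pterm theta k) * V0 <= (1 - theta) / 2 * pterm theta k).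
     { replace (2 * (eta1 * pterm theta k) * V0) with ((4 * V0 * eta1) * (pterm theta k / 2)) by field.
       replace ((1 - theta) / 2 * pterm theta k) with ((1 - theta) * (pterm theta k / 2)) by field.
       apply Rmult_le_compat_r; lra. }
     assert (0 <= eta1 * pterm theta k) by nra. nra. }
   assert ((2 * Acst q - 1) * (1 - theta) / 2 * Rpower (INR (S k)) (q * (1 - theta) - 2 * theta)
            <= (2 * Acst q - 1) * (1 - theta) / 2 * pterm theta k).
   { apply Rmult_le_compat_l; auto. assert (0 <= (2 * Acst q - 1) * (1 - theta)) by nra. lra. }
   nra.
Qed.

Definition Kfun (q theta : R) : R :=
  let a := theta * (q + 2) - q in
  if Rlt_dec ((q + 1) / (q + 2)) theta then a / (a - 1)
  else if Req_EM_T theta ((q + 1) / (q + 2)) then 3 else 1 / (1 - a).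

Definition Cfun (q theta eta1 M : R) : R := M * Kfun q theta / (2 * eta1) + 1.

Lemma Kfun_rate : forall q theta T, 0 <= q -> 0 < theta < 1 -> q / (q + 1) < theta -> (2 <= T)%nat ->
  rsum T (pterm (theta * (q + 2) - q)) * Rpower (INR T) (- (1 - theta)) <= Kfun q theta * LambdaT q theta T
  /\ Rpower (INR T) (- (1 - theta)) <= 4 * LambdaT q theta T
  /\ 0 <= Kfun q theta /\ 0 <= LambdaT q theta T.
Proof. intros q theta T Hq Hth Hqt HT.
 set (a := theta * (q + 2) - q).
 assert (HT1 : 2 <= INR T) by (apply (le_INR 2); auto).
 assert (Hq1 : q < theta * (q + 1)). { apply (Rmult_lt_compat_r (q + 1)) in Hqt; [|lra].
     replace (q / (q + 1) * (q + 1)) with q in Hqt by (field; lra). lra. }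
 assert (Ha0 : 0 < a) by (unfold a; nra).
 assert (Hln : / 2 < ln (INR T)).
 { eapply Rlt_le_trans. apply ln_lt_2. destruct (Req_dec (INR T) 2) as [E|E]. rewrite E; lra.
   left; apply ln_increasing; lra. }
 assert (HTp : 1 <= INR T) by lra.
 assert (HTT : (1 <= T)%nat) by lia.
 set (Pm := Rpower (INR T) (- (1 - theta))). assert (HPm : 0 < Pm) by apply Rpower_pos.
 unfold Kfun, LambdaT. cbv zeta. fold a. fold Pm.
 destruct (Rlt_dec ((q + 1) / (q + 2)) theta) as [C1|C1].
 - assert (Ha1 : 1 < a). { apply (Rmult_lt_compat_r (q + 2)) in C1; [|lra].
     replace ((q + 1) / (q + 2) * (q + 2)) with (q + 1) in C1 by (field; lra). unfold a; lra. }
   pose proof (sum_gt1 a T Ha1 HTT). pose proof (Rpower_pos (INR T) (1 - a)).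
   assert (rsum T (pterm a) <= a / (a - 1)).
   { replace (a / (a - 1)) with (1 + 1 / (a - 1)) by (field; lra).
     assert ((1 - Rpower (INR T) (1 - a)) / (a - 1) <= 1 / (a - 1)).
     { unfold Rdiv. apply Rmult_le_compat_r. left; apply Rinv_0_lt_compat; lra. lra. } lra. }
   split. apply Rmult_le_compat_r; lra. split. lra. split. apply Rlt_le, Rdiv_lt_0_compat; lra. lra.
 - destruct (Req_EM_T theta ((q + 1) / (q + 2))) as [C2|C2].
   + assert (Ha1 : a = 1). { unfold a. rewrite C2. field. lra. }
     rewrite Ha1. pose proof (sum_eq1 T HTT).
     assert (rsum T (pterm 1) * Pm <= (1 + ln (INR T)) * Pm) by (apply Rmult_le_compat_r; lra).
     split. nra. split. nra. split. lra. nra.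
   + assert (Ha1 : a < 1). { assert (theta < (q + 1) / (q + 2)) by lra.
       apply (Rmult_lt_compat_r (q + 2)) in H; [|lra].
       replace ((q + 1) / (q + 2) * (q + 2)) with (q + 1) in H by (field; lra). unfold a; lra. }
     pose proof (sum_lt1 a T (conj Ha0 Ha1) HTT).
     assert (E : Rpower (INR T) (1 - a) * Pm = Rpower (INR T) (- (theta * (1 + q) - q))).
     { unfold Pm. rewrite <- Rpower_plus. f_equal. unfold a. ring. }
     pose proof (Rpower_pos (INR T) (- (theta * (1 + q) - q))).
     split.
     { replace (rsum T (pterm a) * Pm) with (/ (1 - a) * (((1 - a) * rsum T (pterm a)) * Pm)) by (field; lra).
       unfold Rdiv. rewrite Rmult_1_l. apply Rmult_le_compat_l. left; apply Rinv_0_lt_compat; lra.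
       rewrite <- E. apply Rmult_le_compat_r; lra. }
     split.
     { assert (Pm <= Rpower (INR T) (- (theta * (1 + q) - q))).
       { unfold Pm. apply Rpower_exp_le; auto. unfold a in Ha1. lra. } lra. }
     split. apply Rlt_le, Rdiv_lt_0_compat; lra. lra.
Qed.

Lemma final_rate : forall q theta eta1 M N T, 0 <= q -> 0 < theta < 1 -> q / (q + 1) < theta -> (2 <= T)%nat ->
  0 < eta1 -> 0 <= M -> 0 <= N ->
  (N + M * rsum T (pterm (theta * (q + 2) - q))) / (2 * eta1 * Rpower (INR T) (1 - theta))
   <= (2 * N / eta1 + Cfun q theta eta1 M) * LambdaT q theta T.
Proof. intros q theta eta1 M N T Hq Hth Hqt HT He HM HN.
 destruct (Kfun_rate q theta T Hq Hth Hqt HT) as [K1 [K2 [K3 K4]]].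
 set (S := rsum T (pterm (theta * (q + 2) - q))) in *.
 set (Pm := Rpower (INR T) (- (1 - theta))) in *.
 set (L := LambdaT q theta T) in *. set (K := Kfun q theta) in *.
 assert (EP : / Rpower (INR T) (1 - theta) = Pm) by (unfold Pm; rewrite Rpower_Ropp; auto).
 assert (HP : 0 < Rpower (INR T) (1 - theta)) by apply Rpower_pos.
 replace ((N + M * S) / (2 * eta1 * Rpower (INR T) (1 - theta))) with
   (N / (2 * eta1) * Pm + M / (2 * eta1) * (S * Pm)) by (rewrite <- EP; field; lra).
 unfold Cfun. fold K.
 assert (N / (2 * eta1) * Pm <= N / (2 * eta1) * (4 * L)).
 { apply Rmult_le_compat_l; auto. apply Rmult_le_pos; auto. left; apply Rinv_0_lt_compat; lra. }
 assert (M / (2 * eta1) * (S * Pm) <= M / (2 * eta1) * (K * L)).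
 { apply Rmult_le_compat_l; auto. apply Rmult_le_pos; auto. left; apply Rinv_0_lt_compat; lra. }
 replace ((2 * N / eta1 + (M * K / (2 * eta1) + 1)) * L) with
   (N / (2 * eta1) * (4 * L) + M / (2 * eta1) * (K * L) + L) by (field; lra).
 lra.
Qed.

Lemma telescope : forall (Phi g w : nat -> R) T,
  (forall i, (i < T)%nat -> g i <= Phi i - Phi (S i) + w i) ->
  rsum T g <= Phi 0%nat - Phi T + rsum T w.
Proof. induction T; intros; cbn [rsum]. lra.
 assert (rsum T g <= Phi 0%nat - Phi T + rsum T w) by (apply IHT; intros; apply H; lia).
 specialize (H T ltac:(lia)). lra. Qed.

Lemma rsum_swap : forall n m (f : nat -> nat -> R),
  rsum n (fun i => rsum m (fun j => f i j)) = rsum m (fun j => rsum n (fun i => f i j)).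
Proof. induction n; intros; cbn [rsum].
 - induction m; cbn [rsum]; lra.
 - rewrite IHn. rewrite <- rsum_plus. auto. Qed.

Lemma jensen : forall V Vd, convex_second V -> is_left_deriv V Vd ->
  forall n (w a : nat -> R) y, (forall i, (i < n)%nat -> 0 <= w i) -> rsum n w = 1 ->
  V y (rsum n (fun i => w i * a i)) <= rsum n (fun i => w i * V y (a i)).
Proof. intros V Vd Hc Hd n w a y Hw Hs.
 set (b := rsum n (fun i => w i * a i)).
 assert (rsum n (fun i => w i * (V y b + Vd y b * (a i - b))) <= rsum n (fun i => w i * V y (a i))).
 { apply rsum_le. intros. apply Rmult_le_compat_l; auto. apply (subgrad V Vd Hc Hd). }
 assert (E : rsum n (fun i => w i * (V y b + Vd y b * (a i - b))) = V y b).
 { transitivity (rsum n (fun i => (V y b - Vd y b * b) * w i + Vd y b * (w i * a i))).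
   apply rsum_ext; intros; ring. rewrite rsum_plus, !rsum_scal, Hs. fold b. ring. }
 lra.
Qed.

Lemma heval_wavg : forall X (H : RKHS X) Vd m xs ys eta T x,
  heval H (wavg H Vd m xs ys eta T) x =
  rsum T (fun i => eta (S i) / rsum T (fun s => eta (S s)) * heval H (gd H Vd m xs ys eta i) x).
Proof. intros. unfold wavg. rewrite heval_hsum. apply rsum_ext; intros. rewrite heval_scal. auto. Qed.

Lemma risk_wavg : forall X (H : RKHS X) V Vd m xs ys eta T,
  convex_second V -> is_left_deriv V Vd -> (0 < m)%nat ->
  (forall i, (i < T)%nat -> 0 <= eta (S i) / rsum T (fun s => eta (S s))) ->
  rsum T (fun i => eta (S i) / rsum T (fun s => eta (S s))) = 1 ->
  emp_risk H V m xs ys (wavg H Vd m xs ys eta T) <=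
  rsum T (fun i => eta (S i) / rsum T (fun s => eta (S s)) * emp_risk H V m xs ys (gd H Vd m xs ys eta i)).
Proof. intros X H V Vd m xs ys eta T Hc Hd Hm Hw Hs.
 set (w := fun i => eta (S i) / rsum T (fun s => eta (S s))) in *.
 unfold emp_risk.
 transitivity (/ INR m * rsum m (fun j => rsum T (fun i => w i * V (ys j) (heval H (gd H Vd m xs ys eta i) (xs j))))).
 - apply Rmult_le_compat_l. left; apply Rinv_0_lt_compat, lt_0_INR; lia.
   apply rsum_le; intros. rewrite heval_wavg. fold w. apply (jensen V Vd Hc Hd T w); auto.
 - right. rewrite <- rsum_swap. rewrite <- (rsum_scal T (/ INR m)). apply rsum_ext; intros.
   rewrite (rsum_scal m (w i)). unfold w. ring.
Qed.

Theorem mainTheorem13 :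
  forall (q cq theta eta1 kappa : R),
    0 <= q -> 0 < cq -> 0 < theta < 1 -> q / (q + 1) < theta -> 0 < eta1 ->
  exists C1 : R, 0 < C1 /\
  forall (X : Type) (H : RKHS X) (Y : R -> Prop) (V Vd : R -> R -> R) (V0 : R)
         (m : nat) (xs : nat -> X) (ys : nat -> R) (fstar : H) (T : nat),
    (forall y a, 0 <= V y a) ->
    convex_second V ->
    is_left_deriv V Vd ->
    (0 < m)%nat ->
    (forall i, (i < m)%nat -> Y (ys i)) ->
    is_lub (fun r => exists x, r = sqrt (kern H x x)) kappa ->
    is_lub (fun r => exists y, Y y /\ r = V y 0) V0 ->
    (forall y a, Y y -> Rabs (Vd y a) <= cq * (1 + abspow a q)) ->
    eta1 <= sqrt (1 - theta) / (sqrt 2 * cq * Rpower (kappa + 1) (q + 1)) ->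
    4 * V0 * eta1 <= 1 - theta ->
    (2 <= T)%nat ->
    let eta := step eta1 theta in
    let bound := (2 * hnorm2 H fstar / eta1 + C1) * LambdaT q theta T in
    emp_risk H V m xs ys (wavg H Vd m xs ys eta T) - emp_risk H V m xs ys fstar
      <= bound /\
    (forall t, (1 <= t <= T)%nat ->
       (forall s, (1 <= s <= T)%nat ->
          emp_risk H V m xs ys (iterate H Vd m xs ys eta t)
            <= emp_risk H V m xs ys (iterate H Vd m xs ys eta s)) ->
       emp_risk H V m xs ys (iterate H Vd m xs ys eta t) - emp_risk H V m xs ys fstar
         <= bound).
Proof.
 intros q cq theta eta1 kappa Hq Hcq Hth Hqt He.
 set (M := (2 * Acst q - 1) * (1 - theta) / 2).
 assert (HA := Acst_ge1 q).
 assert (HM : 0 <= M) by (unfold M; assert (0 <= (2 * Acst q - 1) * (1 - theta)) by nra; lra).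
 exists (Cfun q theta eta1 M). split.
 { destruct (Kfun_rate q theta 2 Hq Hth Hqt ltac:(lia)) as [_ [_ [K3 _]]].
   unfold Cfun. assert (0 <= M * Kfun q theta / (2 * eta1)).
   { apply Rmult_le_pos. nra. left; apply Rinv_0_lt_compat; lra. } lra. }
 intros X H Y V Vd V0 m xs ys fstar T HV Hc Hd Hm HY Hk HV0l HVd R1 R2 HT eta bound.
 assert (Hkb : forall x, sqrt (kern H x x) <= kappa).
 { intros. destruct Hk as [Hub _]. apply Hub. exists x; auto. }
 assert (Hk0 : 0 <= kappa) by (eapply Rle_trans; [apply sqrt_pos| apply (Hkb (xs 0%nat))]).
 assert (HV0 : forall j, (j < m)%nat -> V (ys j) 0 <= V0).
 { intros. destruct HV0l as [Hub _]. apply Hub. exists (ys j); auto. }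
 assert (HTT : (1 <= T)%nat) by lia.
 set (a := theta * (q + 2) - q).
 set (N := hnorm2 H fstar).
 assert (HN : 0 <= N) by apply hip_pos.
 set (F := fun i => gd H Vd m xs ys eta i).
 set (Es := emp_risk H V m xs ys fstar).
 set (Seta := rsum T (fun s => eta (S s))).
 assert (HSeta : Seta = eta1 * rsum T (pterm theta)).
 { unfold Seta. rewrite <- rsum_scal. apply rsum_ext; intros; reflexivity. }
 assert (HP : 0 < Rpower (INR T) (1 - theta)) by apply Rpower_pos.
 assert (HSlow : eta1 * Rpower (INR T) (1 - theta) <= Seta).
 { rewrite HSeta. apply Rmult_le_compat_l. lra. apply sum_lower; auto; lra. }
 assert (HSpos : 0 < Seta) by nra.
 set (w := fun i => eta (S i) / Seta).
 assert (Hw : forall i, (i < T)%nat -> 0 <= w i).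
 { intros. unfold w. apply Rlt_le, Rdiv_lt_0_compat; auto. unfold eta, step. apply Rmult_lt_0_compat; auto; apply Rpower_pos. }
 assert (Hws : rsum T w = 1).
 { unfold w. transitivity (/ Seta * rsum T (fun s => eta (S s))).
   rewrite <- rsum_scal. apply rsum_ext; intros. unfold Rdiv; ring. fold Seta. field. lra. }
 assert (Tel : rsum T (fun i => 2 * eta (S i) * (emp_risk H V m xs ys (F i) - Es))
               <= N + M * rsum T (pterm a)).
 { eapply Rle_trans.
   apply (telescope (fun i => phi H fstar (F i)) _ (fun i => M * pterm a i)).
   - intros i Hi. cbv beta.
     assert (Hu : hnorm2 H (F i) <= Acst q * Rpower (INR (S i)) (1 - theta)).
     { eapply Rle_trans. apply (iter_bound X H Y V Vd V0 m xs ys q cq theta eta1 kappa); auto.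
       apply Rmult_le_compat_l. lra. apply conv_sum; auto. }
     set (L := cq * (1 + Rpower (kappa * sqrt (Acst q) * Rpower (INR (S i)) ((1 - theta) / 2)) q)).
     assert (HL := Lbound X H Y Vd m xs ys (F i) q cq theta kappa (S i) Hq Hth ltac:(lia) Hkb Hk0 HY HVd Hcq Hu).
     fold L in HL.
     assert (Heta : 0 < eta (S i)) by (unfold eta, step; apply Rmult_lt_0_compat; auto; apply Rpower_pos).
     pose proof (gd_step X H V Vd m xs ys (F i) fstar (eta (S i)) kappa L Hc Hd Hm Heta Hkb Hk0 HL) as G.
     pose proof (step_bound q cq theta eta1 kappa (S i) L Hq Hcq Hth He Hk0 ltac:(lia) R1 eq_refl) as SB.
     assert (Ea : Rpower (INR (S i)) (q * (1 - theta) - 2 * theta) = pterm a i).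
     { unfold pterm, a. f_equal. ring. }
     rewrite Ea in SB. fold M in SB.
     change (F (S i)) with (gd H Vd m xs ys eta (S i)). rewrite gd_S. fold (F i).
     change (step eta1 theta (S i)) with (eta (S i)) in SB. fold Es in G. lra.
   - rewrite phi_zero. pose proof (phi_nonneg X H fstar (F T)). rewrite rsum_scal. fold N. lra. }
 assert (Key : rsum T (fun i => w i * emp_risk H V m xs ys (F i)) - Es <= bound).
 { assert (E1 : rsum T (fun i => w i * emp_risk H V m xs ys (F i)) - Es =
               / (2 * Seta) * rsum T (fun i => 2 * eta (S i) * (emp_risk H V m xs ys (F i) - Es))).
   { rewrite <- rsum_scal.
     transitivity (rsum T (fun i => w i * emp_risk H V m xs ys (F i)) - Es * rsum T w).
     rewrite Hws; ring.
     assert (Dif : forall f g, rsum T f - rsum T g = rsum T (fun i => f i + -1 * g i))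
       by (intros; rewrite rsum_plus, rsum_scal; ring).
     rewrite <- (rsum_scal T Es), Dif.
     apply rsum_ext; intros. unfold w. field. lra. }
   rewrite E1.
   assert (HX : 0 <= N + M * rsum T (pterm a)).
   { assert (0 <= rsum T (pterm a)) by (apply rsum_nonneg; intros; left; apply Rpower_pos). nra. }
   eapply Rle_trans. apply Rmult_le_compat_l. left; apply Rinv_0_lt_compat; lra. exact Tel.
   eapply Rle_trans; [|apply (final_rate q theta eta1 M N T); auto].
   unfold Rdiv. rewrite Rmult_comm. apply Rmult_le_compat_l; auto.
   apply Rinv_le_contravar. nra. lra. }
 split.
 - eapply Rle_trans; [|exact Key]. apply Rplus_le_compat_r.
   apply (risk_wavg X H V Vd m xs ys eta T Hc Hd Hm); auto.
 - intros t Ht Hmin. eapply Rle_trans; [|exact Key]. apply Rplus_le_compat_r.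
   set (c := emp_risk H V m xs ys (iterate H Vd m xs ys eta t)).
   transitivity (rsum T (fun i => w i * c)).
   { replace (rsum T (fun i => w i * c)) with (c * rsum T w) by (rewrite <- rsum_scal; apply rsum_ext; intros; ring).
     rewrite Hws; lra. }
   apply rsum_le. intros. apply Rmult_le_compat_l; auto.
   specialize (Hmin (S i) ltac:(lia)). unfold iterate in Hmin at 2. simpl in Hmin. exact Hmin.
Qed.
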